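(* Let $0<q<1$, $\tau\in\mathbb{R}$ and $\phi\in[0,2\pi)$. Let $\{e_n\}_{n\in\mathbb{Z}_+}$ be the standard orthonormal basis of $\ell^2(\mathbb{Z}_+)$ and let $D$ be the bounded self-adjoint operator on $\ell^2(\mathbb{Z}_+)$ with $De_n=q^{2n}e_n$. For $\lambda\in\{-q^{2k}\mid k\in\mathbb{Z}_+\}\cup\{q^{2\tau+2k}\mid k\in\mathbb{Z}_+\}$ let $$v_\lambda^\phi=\sum_{n=0}^\infty i^n e^{in\phi}p_n(\lambda)e_n,\qquad p_n(\lambda)=\frac{q^{-n\tau}q^{\frac12 n(n-1)}}{\sqrt{(q^2;q^2)_n}}\;{}_2\varphi_1\!\left(q^{-2n},\,q^{2\tau}/\lambda;\,0;\,q^2,\,-q^2\lambda\right).$$ Then for all $k,l\in\mathbb{Z}_+$ with $k\geq l$, $$\langle Dv^\phi_{-q^{2k}},v^\phi_{-q^{2l}}\rangle=(-q^{2\tau+2};q^2)_\infty\,(q^2;q^2)_k\,(-q^{2-2\tau};q^2)_l,$$ $$\langle Dv^\phi_{q^{2\tau+2k}},v^\phi_{q^{2\tau+2l}}\rangle=(-q^{2-2\tau};q^2)_\infty\,(q^2;q^2)_k\,(-q^{2+2\tau};q^2)_l,$$ and for all $k,l\in\mathbb{Z}_+$, $$\langle Dv^\phi_{-q^{2k}},v^\phi_{q^{2\tau+2l}}\rangle=(q^2;q^2)_\infty\,(-q^{2-2\tau};q^2)_k\,(-q^{2+2\tau};q^2)_l.$$ (The remaining matrix coefficients follow from self-adjointness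 of $D$.)
   Context: For $k\in\mathbb{Z}_+\cup\{\infty\}$ the $q$-shifted factorial is $(a;q)_k=\prod_{i=0}^{k-1}(1-aq^i)$, and $(a_1,\dots,a_r;q)_k=\prod_{i}(a_i;q)_k$. The basic hypergeometric series is ${}_2\varphi_1(a,b;c;p,z)=\sum_{j\ge0}\frac{(a;p)_j(b;p)_j}{(p;p)_j(c;p)_j}z^j$ (here terminating since $a=q^{-2n}$, $p=q^2$). The vectors $v_\lambda^\phi$ lie in $\ell^2(\mathbb{Z}_+)$ (they are the eigenvectors forming an orthogonal basis). $\langle\cdot,\cdot\rangle$ is the inner product of $\ell^2(\mathbb{Z}_+)$. *)

(* Defs.v *)
From Stdlib Require Import Reals.
From Coquelicot Require Import Coquelicot.
Open Scope R_scope.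

Fixpoint qpoch (a q : R) (k : nat) : R :=
  match k with
  | O => 1
  | S k' => qpoch a q k' * (1 - a * q ^ k')
  end.

Definition qpoch_inf (a q : R) : R := real (Lim_seq (fun k => qpoch a q k)).

Definition phi21 (a b c p z : R) : R :=
  Series (fun j => qpoch a p j * qpoch b p j / (qpoch p p j * qpoch c p j) * z ^ j).

Definition pn (q tau lam : R) (n : nat) : R :=
  Rpower q (- INR n * tau) * Rpower q (INR n * (INR n - 1) / 2)
  / sqrt (qpoch (q ^ 2) (q ^ 2) n)
  * phi21 (/ q ^ (2 * n)) (Rpower q (2 * tau) / lam) 0 (q ^ 2) (- q ^ 2 * lam).

(* coordinates of v_lambda^phi in the standard basis e_n of l^2(Z_+):
   i^n e^{i n phi} p_n(lambda) *)
Definition vvec (q tau phi lam : R) (n : nat) : C :=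
  (Cpow Ci n * (cos (INR n * phi), sin (INR n * phi)) * RtoC (pn q tau lam n))%C.

Definition Dop (q : R) (v : nat -> C) (n : nat) : C := (RtoC (q ^ (2 * n)) * v n)%C.

Definition inner_is (x y : nat -> C) (l : C) : Prop :=
  is_series (fun n => (x n * Cconj (y n))%C) l.

(* Main.v *)
Require Import Defs.
From Stdlib Require Import Reals Lra Lia.
From Coquelicot Require Import Coquelicot.
Open Scope R_scope.


Definition Eop (Q : R) (f : nat -> R) (n : nat) : R :=
  match n with O => 0 | S m => (1 - Q ^ (S m)) / Q ^ m * f m end.

Fixpoint Rk (Q a b : R) (k : nat) : nat -> R :=
  match k with
  | O => fun n => (- b) ^ n
  | S k' => fun n => Rk Q a b k' n - a * Q ^ k' * Eop Q (Rk Q a b k') n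
  end.

Lemma Eop_ext Q f g n : (forall j, f j = g j) -> Eop Q f n = Eop Q g n.
Proof. intros H; destruct n; simpl; [reflexivity| rewrite H; reflexivity]. Qed.

Lemma Eop_lin Q f g c d n :
  Eop Q (fun j => c * f j + d * g j) n = c * Eop Q f n + d * Eop Q g n.
Proof. destruct n; simpl; ring. Qed.

Lemma Rk_S Q a b k n :
  Rk Q a b (S k) n = Rk Q a b k n - a * Q ^ k * Eop Q (Rk Q a b k) n.
Proof. reflexivity. Qed.

Lemma Rk_bQ Q a b k n : Q <> 0 ->
  Rk Q a (b / Q) k n = Rk Q a b k n - b / Q * Eop Q (Rk Q a b k) n.
Proof.
  intros HQ. revert n; induction k as [|k IH]; intros n.
  - destruct n as [|m]; simpl; [ring|].
    assert (Hm : (- b) ^ m = (- (b / Q)) ^ m * Q ^ m).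
    { rewrite <- Rpow_mult_distr. f_equal. field. exact HQ. }
    rewrite Hm. assert (Q ^ m <> 0) by (apply pow_nonzero; exact HQ).
    field. split; assumption.
  - rewrite !Rk_S. rewrite IH.
    rewrite (Eop_ext Q (Rk Q a (b / Q) k)
              (fun j => 1 * Rk Q a b k j + (- (b / Q)) * Eop Q (Rk Q a b k) j)).
    2:{ intros j. rewrite IH. ring. }
    rewrite Eop_lin.
    rewrite (Eop_ext Q (fun n0 => Rk Q a b k n0 - a * Q ^ k * Eop Q (Rk Q a b k) n0)
              (fun j => 1 * Rk Q a b k j + (- (a * Q ^ k)) * Eop Q (Rk Q a b k) j)).
    2:{ intros j. ring. }
    rewrite Eop_lin. ring.
Qed.

Lemma Eop_shift Q f n : Q <> 0 ->
  Eop Q f (S n) = / Q * Eop Q (fun j => f (S j)) n + (1 - Q) * f n.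
Proof.
  intros HQ. destruct n as [|m].
  - simpl. field. exact HQ.
  - simpl. assert (Q ^ m <> 0) by (apply pow_nonzero; exact HQ). field. split; assumption.
Qed.

Lemma Rk_shift Q a b k n : Q <> 0 ->
  Rk Q a b k (S n) + b * Rk Q a b k n = - a * (1 - Q ^ k) * Rk Q a (b / Q) (pred k) n.
Proof.
  intros HQ. revert n; induction k as [|k IH]; intros n.
  - simpl. ring.
  - rewrite !Rk_S. rewrite Eop_shift by exact HQ.
    rewrite (Eop_ext Q (fun j => Rk Q a b k (S j))
              (fun j => (- a * (1 - Q ^ k)) * Rk Q a (b / Q) (pred k) j + (- b) * Rk Q a b k j)).
    2:{ intros j. rewrite <- IH. ring. }
    rewrite Eop_lin.
    assert (HS : Rk Q a b k (S n) = - a * (1 - Q ^ k) * Rk Q a (b / Q) (pred k) n - b * Rk Q a b k n).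
    { rewrite <- IH. ring. }
    rewrite HS. simpl pred.
    assert (H2 : Rk Q a (b / Q) k n = Rk Q a b k n - b / Q * Eop Q (Rk Q a b k) n)
      by (apply Rk_bQ; exact HQ).
    destruct k as [|k'].
    + simpl pred. simpl pow. simpl pow in H2.
      transitivity (- a * (1 - Q) * (Rk Q a b 0 n - b / Q * Eop Q (Rk Q a b 0) n)).
      * field. exact HQ.
      * rewrite <- H2. ring.
    + simpl pred.
      assert (H1 : Rk Q a (b / Q) (S k') n =
                   Rk Q a (b / Q) k' n - a * Q ^ k' * Eop Q (Rk Q a (b / Q) k') n) by reflexivity.
      transitivity (- a * (1 - Q ^ (S k')) * (Rk Q a (b / Q) k' n - a * Q ^ k' * Eop Q (Rk Q a (b / Q) k') n)
                    - a * Q ^ (S k') * (1 - Q) * (Rk Q a b (S k') n - b / Q * Eop Q (Rk Q a b (S k')) n)).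
      * simpl pow. field. exact HQ.
      * rewrite <- H1, <- H2. simpl pow. ring.
Qed.


Fixpoint cw (Q : R) (n : nat) : R :=
  match n with O => 1 | S m => cw Q m * Q ^ m / (1 - Q ^ (S m)) end.

Definition ww (Q u : R) (n : nat) : R := u ^ n * cw Q n.
Definition term (Q u : R) (X Y : nat -> R) (n : nat) : R := ww Q u n * X n * Y n.

Lemma powS_lt1 Q m : 0 < Q < 1 -> Q ^ (S m) < 1.
Proof. intros HQ. destruct (pow_lt_1_compat Q (S m)) as [_ H]; [lra|lia|exact H]. Qed.

Lemma powS_neq1 Q m : 0 < Q < 1 -> 1 - Q ^ (S m) <> 0.
Proof. intros HQ. pose proof (powS_lt1 Q m HQ). lra. Qed.

Lemma cw_pos Q n : 0 < Q < 1 -> 0 < cw Q n.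
Proof.
  intros HQ. induction n; simpl. lra.
  pose proof (powS_lt1 Q n HQ). simpl in H.
  apply Rdiv_lt_0_compat; [|lra]. apply Rmult_lt_0_compat; [exact IHn|]. apply pow_lt; lra.
Qed.

Lemma ww_adj Q u m : 0 < Q < 1 ->
  ww Q u (S m) * ((1 - Q ^ (S m)) / Q ^ m) = u * ww Q u m.
Proof.
  intros HQ. unfold ww. simpl cw.
  pose proof (powS_neq1 Q m HQ). assert (Q ^ m <> 0) by (apply pow_nonzero; lra).
  simpl pow. simpl pow in H. field. split; assumption.
Qed.

Ltac toR := match goal with |- @eq _ ?a ?b => change (@eq R a b) end.

Lemma is_series_cl (a : nat -> R) l c : is_series a l -> is_series (fun n => c * a n) (c * l).
Proof. intros H. exact (is_series_scal_l c a l H). Qed.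

Lemma is_series_lin (a b : nat -> R) la lb c d :
  is_series a la -> is_series b lb ->
  is_series (fun n => c * a n + d * b n) (c * la + d * lb).
Proof.
  intros Ha Hb.
  apply (is_series_plus (fun n => c * a n) (fun n => d * b n) (c * la) (d * lb));
    apply is_series_cl; assumption.
Qed.

Lemma is_series_shift0 (s : nat -> R) (l : R) :
  s O = 0 -> is_series (fun k => s (S k)) l -> is_series s l.
Proof.
  intros H0 H. apply is_series_decr_1.
  match goal with |- is_series _ ?x => replace x with l end; [exact H|].
  unfold plus, opp; simpl. rewrite H0. ring.
Qed.

Lemma term_swap Q u X Y n : term Q u X Y n = term Q u Y X n.
Proof. unfold term; ring. Qed.

Lemma adj_step Q u X Y c v1 v2 : 0 < Q < 1 ->
  is_series (term Q u X Y) v1 ->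
  is_series (term Q u (fun j => X (S j)) Y) v2 ->
  is_series (term Q u X (fun n => Y n - c * Eop Q Y n)) (v1 - c * u * v2).
Proof.
  intros HQ H1 H2.
  set (s := fun n => match n with O => 0 | S m => u * term Q u (fun j => X (S j)) Y m end).
  assert (Hs : is_series s (u * v2)).
  { apply is_series_shift0; [reflexivity|]. simpl.
    apply (is_series_cl _ _ u H2). }
  assert (H := is_series_lin _ _ _ _ 1 (- c) H1 Hs).
  replace (v1 - c * u * v2) with (1 * v1 + - c * (u * v2)) by ring.
  revert H. apply is_series_ext. intros n.
  toR. unfold s, term. destruct n as [|m]; simpl Eop.
  - ring.
  - pose proof (ww_adj Q u m HQ) as W. simpl pow in W.
    replace (u * (ww Q u m * X (S m) * Y m)) with ((u * ww Q u m) * X (S m) * Y m) by ring.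
    rewrite <- W. ring.
Qed.

Lemma gstep Q u a b a' b' k l v1 v2 : 0 < Q < 1 ->
  is_series (term Q u (Rk Q a b k) (Rk Q a' b' l)) v1 ->
  is_series (term Q u (Rk Q a (b / Q) (pred k)) (Rk Q a' b' l)) v2 ->
  is_series (term Q u (Rk Q a b k) (Rk Q a' b' (S l)))
            (v1 - a' * Q ^ l * u * (- b * v1 - a * (1 - Q ^ k) * v2)).
Proof.
  intros HQ H1 H2.
  apply (adj_step Q u (Rk Q a b k) (Rk Q a' b' l) (a' * Q ^ l)); [exact HQ|exact H1|].
  assert (H := is_series_lin _ _ _ _ (- b) (- a * (1 - Q ^ k)) H1 H2).
  replace (- b * v1 - a * (1 - Q ^ k) * v2) with (- b * v1 + - a * (1 - Q ^ k) * v2) by ring.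
  revert H. apply is_series_ext. intros n. toR. unfold term.
  assert (E : Rk Q a b k (S n) = - b * Rk Q a b k n - a * (1 - Q ^ k) * Rk Q a (b / Q) (pred k) n).
  { pose proof (Rk_shift Q a b k n ltac:(lra)). lra. }
  rewrite E. ring.
Qed.


Lemma cw_ratio_lim Q : 0 < Q < 1 ->
  is_lim_seq (fun n => Rabs (cw Q (S n) / cw Q n)) 0.
Proof.
  intros HQ.
  apply is_lim_seq_ext with (u := fun n => Q ^ n / (1 - Q * Q ^ n)).
  { intros n. simpl cw. pose proof (cw_pos Q n HQ).
    pose proof (powS_lt1 Q n HQ). simpl pow in H0.
    rewrite Rabs_pos_eq.
    - field. split; lra.
    - apply Rlt_le, Rdiv_lt_0_compat; [|exact H].
      apply Rdiv_lt_0_compat; [|lra].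
      apply Rmult_lt_0_compat; [exact H|apply pow_lt; lra]. }
  replace (Finite 0) with (Finite (0 / (1 - Q * 0))) by (f_equal; field; lra).
  apply is_lim_seq_div'.
  - apply is_lim_seq_geom. rewrite Rabs_pos_eq; lra.
  - apply is_lim_seq_minus'. apply is_lim_seq_const.
    apply is_lim_seq_mult'. apply is_lim_seq_const. apply is_lim_seq_geom. rewrite Rabs_pos_eq; lra.
  - lra.
Qed.

Lemma cw_radius Q : 0 < Q < 1 -> CV_radius (cw Q) = p_infty.
Proof.
  intros HQ. apply CV_radius_infinite_DAlembert.
  - intros n. pose proof (cw_pos Q n HQ). lra.
  - apply cw_ratio_lim; exact HQ.
Qed.

Definition LE (Q x : R) : R := PSeries (cw Q) x.

Lemma LE_is_series Q x : 0 < Q < 1 -> is_series (fun n => cw Q n * x ^ n) (LE Q x).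
Proof.
  intros HQ. unfold LE, PSeries. apply Series_correct.
  assert (H : ex_pseries (cw Q) x).
  { apply CV_radius_inside. rewrite cw_radius by exact HQ. simpl. exact I. }
  unfold ex_pseries in H. revert H. apply ex_series_ext.
  intros n. rewrite pow_n_pow. unfold scal; simpl. unfold mult; simpl. ring.
Qed.

Lemma LE_feq Q x : 0 < Q < 1 -> LE Q x = (1 + x) * LE Q (Q * x).
Proof.
  intros HQ.
  pose proof (LE_is_series Q x HQ) as H1.
  pose proof (LE_is_series Q (Q * x) HQ) as H2.
  set (d := fun n => cw Q n * x ^ n - cw Q n * (Q * x) ^ n).
  assert (Hd1 : is_series d (LE Q x - LE Q (Q * x))).
  { pose proof (is_series_lin _ _ _ _ 1 (-1) H1 H2) as H.
    replace (LE Q x - LE Q (Q * x)) with (1 * LE Q x + -1 * LE Q (Q * x)) by ring.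
    revert H. apply is_series_ext. intros n. toR. unfold d. ring. }
  assert (Hd2 : is_series d (x * LE Q (Q * x))).
  { apply is_series_shift0.
    - unfold d. simpl. ring.
    - pose proof (is_series_cl _ _ x H2) as H. revert H. apply is_series_ext.
      intros n. toR. unfold d. simpl cw. rewrite !Rpow_mult_distr.
      pose proof (powS_neq1 Q n HQ). simpl pow. simpl pow in H. field. exact H. }
  pose proof (is_series_unique _ _ Hd1) as E1.
  pose proof (is_series_unique _ _ Hd2) as E2.
  rewrite E1 in E2. lra.
Qed.

Lemma LE_iter Q x N : 0 < Q < 1 -> LE Q x = qpoch (- x) Q N * LE Q (Q ^ N * x).
Proof.
  intros HQ. induction N as [|N IH].
  - simpl. rewrite !Rmult_1_l. reflexivity.
  - rewrite IH. rewrite (LE_feq Q (Q ^ N * x) HQ). simpl.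
    replace (Q * (Q ^ N * x)) with (Q * Q ^ N * x) by ring. ring.
Qed.

Lemma LE_lim Q x : 0 < Q < 1 -> is_lim_seq (fun N => LE Q (Q ^ N * x)) 1.
Proof.
  intros HQ.
  assert (H0 : LE Q 0 = 1).
  { unfold LE. rewrite PSeries_0. reflexivity. }
  rewrite <- H0.
  apply (is_lim_seq_continuous (LE Q) (fun N => Q ^ N * x) 0).
  - unfold LE. apply PSeries_continuity. rewrite cw_radius by exact HQ. simpl. exact I.
  - replace (Finite 0) with (Finite (0 * x)) by (f_equal; ring).
    apply is_lim_seq_mult'. apply is_lim_seq_geom. rewrite Rabs_pos_eq; lra.
    apply is_lim_seq_const.
Qed.

Lemma qpoch_lim Q x : 0 < Q < 1 -> is_lim_seq (fun N => qpoch (- x) Q N) (LE Q x).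
Proof.
  intros HQ.
  pose proof (LE_lim Q x HQ) as HL.
  apply is_lim_seq_ext_loc with (u := fun N => LE Q x / LE Q (Q ^ N * x)).
  - pose proof HL as HL'. apply is_lim_seq_spec in HL'.
    destruct (HL' (mkposreal (1/2) ltac:(lra))) as [N0 HN0].
    exists N0. intros N HN. specialize (HN0 N HN). simpl in HN0.
    apply Rabs_lt_between' in HN0.
    rewrite (LE_iter Q x N HQ) at 1. field. lra.
  - replace (Finite (LE Q x)) with (Finite (LE Q x / 1)) by (f_equal; field).
    apply is_lim_seq_div'. apply is_lim_seq_const. exact HL. lra.
Qed.

Lemma qpoch_inf_LE Q x : 0 < Q < 1 -> qpoch_inf (- x) Q = LE Q x.
Proof.
  intros HQ. unfold qpoch_inf. rewrite (is_lim_seq_unique _ _ (qpoch_lim Q x HQ)). reflexivity.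
Qed.

Lemma euler Q x : 0 < Q < 1 -> is_series (fun n => cw Q n * x ^ n) (qpoch_inf (- x) Q).
Proof. intros HQ. rewrite qpoch_inf_LE by exact HQ. apply LE_is_series; exact HQ. Qed.

Lemma qpoch_conv Q c : 0 < Q < 1 -> is_lim_seq (fun N => qpoch c Q N) (qpoch_inf c Q).
Proof.
  intros HQ. replace c with (- - c) by ring.
  rewrite qpoch_inf_LE by exact HQ. apply qpoch_lim; exact HQ.
Qed.

Lemma qpoch_peel x Q j : qpoch x Q (S j) = (1 - x) * qpoch (x * Q) Q j.
Proof.
  induction j as [|j IH].
  - simpl. ring.
  - change (qpoch x Q (S (S j))) with (qpoch x Q (S j) * (1 - x * Q ^ (S j))).
    rewrite IH. simpl. ring.
Qed.

Lemma qpoch_inf_shift Q c : 0 < Q < 1 ->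
  qpoch_inf (c / Q) Q = (1 - c / Q) * qpoch_inf c Q.
Proof.
  intros HQ.
  pose proof (qpoch_conv Q (c / Q) HQ) as H1.
  apply is_lim_seq_incr_1 in H1.
  pose proof (qpoch_conv Q c HQ) as H2.
  apply (is_lim_seq_scal_l _ (1 - c / Q)) in H2.
  assert (E : forall N, qpoch (c / Q) Q (S N) = (1 - c / Q) * qpoch c Q N).
  { intros N. rewrite qpoch_peel. replace (c / Q * Q) with c by (field; lra). reflexivity. }
  apply (is_lim_seq_ext _ _ _ E) in H1.
  pose proof (is_lim_seq_unique _ _ H1) as U1.
  pose proof (is_lim_seq_unique _ _ H2) as U2.
  rewrite U1 in U2. simpl in U2. injection U2. auto.
Qed.


Lemma base_pair Q u a b a' b' k : 0 < Q < 1 ->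
  is_series (term Q u (Rk Q a b k) (Rk Q a' b' 0))
            (qpoch (- (a * u * b')) Q k * qpoch_inf (- (u * b * b')) Q).
Proof.
  intros HQ. induction k as [|k IH].
  - simpl qpoch. rewrite Rmult_1_l.
    pose proof (euler Q (u * b * b') HQ) as H. revert H. apply is_series_ext.
    intros n. toR. unfold term, ww. simpl Rk.
    transitivity (cw Q n * (u ^ n * ((- b) ^ n * (- b') ^ n))); [| ring].
    rewrite <- !Rpow_mult_distr. f_equal. f_equal. ring.
  - assert (H1 : is_series (term Q u (Rk Q a' b' 0) (Rk Q a b k))
                   (qpoch (- (a * u * b')) Q k * qpoch_inf (- (u * b * b')) Q)).
    { revert IH. apply is_series_ext. intros n. apply term_swap. }
    assert (H2 : is_series (term Q u (fun j => Rk Q a' b' 0 (S j)) (Rk Q a b k))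
                   (- b' * (qpoch (- (a * u * b')) Q k * qpoch_inf (- (u * b * b')) Q))).
    { pose proof (is_series_cl _ _ (- b') H1) as H. revert H. apply is_series_ext.
      intros n. toR. unfold term. simpl. ring. }
    pose proof (adj_step Q u (Rk Q a' b' 0) (Rk Q a b k) (a * Q ^ k) _ _ HQ H1 H2) as H.
    apply (is_series_ext _ _ _ (fun n => term_swap Q u _ _ n)) in H.
    match goal with |- is_series _ ?v => replace v with
      (qpoch (- (a * u * b')) Q k * qpoch_inf (- (u * b * b')) Q -
       a * Q ^ k * u * (- b' * (qpoch (- (a * u * b')) Q k * qpoch_inf (- (u * b * b')) Q))) end.
    + exact H.
    + simpl qpoch. ring.
Qed.

Lemma is_series_val (a : nat -> R) (v w : R) : is_series a v -> v = w -> is_series a w.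
Proof. intros H E; rewrite <- E; exact H. Qed.

Lemma Qm_nz Q m : 0 < Q < 1 -> Q ^ m <> 0.
Proof. intros HQ. apply pow_nonzero. lra. Qed.

Lemma NN Q t : 0 < Q < 1 -> 0 < t -> forall l k m, (l <= k)%nat ->
  is_series (term Q (Q / t) (Rk Q (-1) (t / Q ^ m) k) (Rk Q (-1) t l))
    (qpoch_inf (- (Q / t * (t / Q ^ m) * t)) Q * qpoch Q Q k * qpoch (- (Q / t)) Q l).
Proof.
  intros HQ Ht l. induction l as [|l IH]; intros k m Hlk.
  - eapply is_series_val; [apply base_pair; exact HQ|].
    replace (- (-1 * (Q / t) * t)) with Q by (field; lra). simpl qpoch. ring.
  - destruct k as [|k']; [lia|].
    pose proof (IH (S k') m ltac:(lia)) as H1.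
    pose proof (IH k' (S m) ltac:(lia)) as H2.
    replace (t / Q ^ (S m)) with (t / Q ^ m / Q) in H2
      by (simpl; field; split; [apply Qm_nz; exact HQ | lra]).
    pose proof (gstep Q (Q / t) (-1) (t / Q ^ m) (-1) t (S k') l _ _ HQ H1 H2) as H.
    eapply is_series_val; [exact H|].
    replace (- (Q / t * (t / Q ^ m / Q) * t)) with ((- (Q / t * (t / Q ^ m) * t)) / Q)
      by (field; split; [apply Qm_nz; exact HQ|split; lra]).
    rewrite qpoch_inf_shift by exact HQ.
    set (E := qpoch_inf (- (Q / t * (t / Q ^ m) * t)) Q).
    simpl qpoch. simpl pred. simpl pow.
    pose proof (Qm_nz Q m HQ).
    field. split; lra.
Qed.

Lemma PP Q t : 0 < Q < 1 -> 0 < t -> forall l k m, (l <= k)%nat ->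
  is_series (term Q (Q / t) (Rk Q t (-1 / Q ^ m) k) (Rk Q t (-1) l))
    (qpoch_inf (- (Q / t * (-1 / Q ^ m) * -1)) Q * qpoch Q Q k * qpoch (- (Q * t)) Q l).
Proof.
  intros HQ Ht l. induction l as [|l IH]; intros k m Hlk.
  - eapply is_series_val; [apply base_pair; exact HQ|].
    replace (- (t * (Q / t) * -1)) with Q by (field; lra). simpl qpoch. ring.
  - destruct k as [|k']; [lia|].
    pose proof (IH (S k') m ltac:(lia)) as H1.
    pose proof (IH k' (S m) ltac:(lia)) as H2.
    replace (-1 / Q ^ (S m)) with (-1 / Q ^ m / Q) in H2
      by (simpl; field; split; [apply Qm_nz; exact HQ | lra]).
    pose proof (gstep Q (Q / t) t (-1 / Q ^ m) t (-1) (S k') l _ _ HQ H1 H2) as H.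
    eapply is_series_val; [exact H|].
    replace (- (Q / t * (-1 / Q ^ m / Q) * -1)) with ((- (Q / t * (-1 / Q ^ m) * -1)) / Q)
      by (field; split; [apply Qm_nz; exact HQ|split; lra]).
    rewrite qpoch_inf_shift by exact HQ.
    set (E := qpoch_inf (- (Q / t * (-1 / Q ^ m) * -1)) Q).
    simpl qpoch. simpl pred. simpl pow.
    pose proof (Qm_nz Q m HQ).
    field. split; lra.
Qed.

Lemma qpoch_inf_zero Q m : 0 < Q < 1 -> qpoch_inf (/ Q ^ m) Q = 0.
Proof.
  intros HQ. induction m as [|m IH].
  - simpl. replace (/ 1) with (Q / Q) by (field; lra).
    rewrite qpoch_inf_shift by exact HQ. replace (Q / Q) with 1 by (field; lra). ring.
  - replace (/ Q ^ (S m)) with (/ Q ^ m / Q) by (simpl; field; split; [apply Qm_nz; exact HQ|lra]).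
    rewrite qpoch_inf_shift by exact HQ. rewrite IH. ring.
Qed.

Lemma NP Q t : 0 < Q < 1 -> 0 < t -> forall l k m,
  is_series (term Q (Q / t) (Rk Q (-1) (t / Q ^ m) k) (Rk Q t (-1) l))
    (qpoch_inf (- (Q / t * (t / Q ^ m) * -1)) Q * qpoch (- (Q / t)) Q k * qpoch (- (Q * t)) Q l).
Proof.
  intros HQ Ht l. induction l as [|l IH]; intros k m.
  - eapply is_series_val; [apply base_pair; exact HQ|].
    replace (- (-1 * (Q / t) * -1)) with (- (Q / t)) by (field; lra). simpl qpoch. ring.
  - pose proof (IH k m) as H1.
    pose proof (IH (pred k) (S m)) as H2.
    replace (t / Q ^ (S m)) with (t / Q ^ m / Q) in H2
      by (simpl; field; split; [apply Qm_nz; exact HQ | lra]).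
    pose proof (gstep Q (Q / t) (-1) (t / Q ^ m) t (-1) k l _ _ HQ H1 H2) as H.
    eapply is_series_val; [exact H|].
    assert (Z1 : qpoch_inf (- (Q / t * (t / Q ^ m / Q) * -1)) Q = 0).
    { replace (- (Q / t * (t / Q ^ m / Q) * -1)) with (/ Q ^ m)
        by (field; split; [apply Qm_nz; exact HQ|split; lra]).
      apply qpoch_inf_zero; exact HQ. }
    rewrite Z1.
    destruct m as [|m'].
    + simpl qpoch. simpl pow. field. lra.
    + assert (Z2 : qpoch_inf (- (Q / t * (t / Q ^ (S m')) * -1)) Q = 0).
      { replace (- (Q / t * (t / Q ^ (S m')) * -1)) with (/ Q ^ m')
          by (simpl; field; split; [apply Qm_nz; exact HQ|split; lra]).
        apply qpoch_inf_zero; exact HQ. }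
      rewrite Z2. ring.
Qed.


Fixpoint fs (f : nat -> R) (N : nat) : R :=
  match N with O => 0 | S N' => fs f N' + f N' end.

Lemma fs_ext f g N : (forall j, f j = g j) -> fs f N = fs g N.
Proof. intros H; induction N; simpl; [reflexivity| rewrite IHN, H; reflexivity]. Qed.

Lemma fs_lin f g c d N : fs (fun j => c * f j + d * g j) N = c * fs f N + d * fs g N.
Proof. induction N; simpl; [ring| rewrite IHN; ring]. Qed.

Lemma fs_shift f N : fs f (S N) = f O + fs (fun j => f (S j)) N.
Proof. induction N; simpl in *; [ring| rewrite IHN; ring]. Qed.

Lemma fs_trunc f n N : (forall j, (n < j)%nat -> f j = 0) -> (n < N)%nat -> fs f N = fs f (S n).
Proof.
  intros H HN. induction N as [|N IH]; [lia|].
  destruct (Nat.eq_dec N n) as [->|Hne]; [reflexivity|].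
  simpl. rewrite IH by lia. rewrite (H N) by lia. simpl. ring.
Qed.

Lemma fs_tele h N :
  fs (fun j => h j - match j with O => 0 | S i => h i end) N =
  match N with O => 0 | S N' => h N' end.
Proof. induction N as [|N IH]; simpl; [reflexivity|]. rewrite IH. destruct N; ring. Qed.

Lemma sum_n_fs f N : sum_n f N = fs f (S N).
Proof.
  induction N as [|N IH].
  - rewrite sum_O. simpl. rewrite Rplus_0_l. reflexivity.
  - rewrite sum_Sn, IH. unfold plus; simpl. reflexivity.
Qed.

Lemma Series_fin f n : (forall j, (n < j)%nat -> f j = 0) -> Series f = fs f (S n).
Proof.
  intros H. apply is_series_unique. unfold is_series.
  apply filterlim_locally. intros eps. exists n. intros N HN.
  rewrite sum_n_fs. rewrite (fs_trunc f n (S N) H) by lia. apply ball_center.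
Qed.

Lemma qpoch0 Q j : qpoch 0 Q j = 1.
Proof. induction j; simpl; [reflexivity| rewrite IHj; ring]. Qed.

Lemma qpoch_high Q n j : 0 < Q -> (n < j)%nat -> qpoch (/ Q ^ n) Q j = 0.
Proof.
  intros HQ Hj. induction j as [|j IH]; [lia|].
  simpl. destruct (Nat.eq_dec j n) as [->|Hne].
  - assert (Q ^ n <> 0) by (apply pow_nonzero; lra). field_simplify; [ring| assumption].
  - rewrite IH by lia. ring.
Qed.

Lemma qpoch_QQ_pos Q j : 0 < Q < 1 -> 0 < qpoch Q Q j.
Proof.
  intros HQ. induction j; simpl; [lra|].
  apply Rmult_lt_0_compat; [exact IHj|]. pose proof (powS_lt1 Q j HQ). simpl in H. lra.
Qed.

Definition beta (Q : R) (n j : nat) : R := qpoch (/ Q ^ n) Q j * (- Q) ^ j / qpoch Q Q j.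

Fixpoint cc (t Q lam : R) (j : nat) : R :=
  match j with O => 1 | S i => cc t Q lam i * (lam - t * Q ^ i) end.

Definition phig (Q t lam : R) (n : nat) : R := phi21 (/ Q ^ n) (t / lam) 0 Q (- Q * lam).

Lemma trm_eq t Q lam j : lam <> 0 ->
  qpoch (t / lam) Q j * (- Q * lam) ^ j = (- Q) ^ j * cc t Q lam j.
Proof.
  intros Hl. induction j as [|j IH]; simpl; [ring|].
  transitivity ((qpoch (t / lam) Q j * (- Q * lam) ^ j) * ((1 - t / lam * Q ^ j) * (- Q * lam))).
  - ring.
  - rewrite IH. field. exact Hl.
Qed.

Lemma phig_fs Q t lam n N : 0 < Q < 1 -> lam <> 0 -> (n < N)%nat ->
  phig Q t lam n = fs (fun j => beta Q n j * cc t Q lam j) N.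
Proof.
  intros HQ Hl HN. unfold phig, phi21.
  rewrite (Series_fin _ n).
  - rewrite (fs_trunc (fun j => beta Q n j * cc t Q lam j) n N); [|intros j Hj|exact HN].
    + apply fs_ext. intros j. rewrite qpoch0. unfold beta.
      pose proof (qpoch_QQ_pos Q j HQ).
      transitivity (qpoch (/ Q ^ n) Q j / qpoch Q Q j * (qpoch (t / lam) Q j * (- Q * lam) ^ j)).
      * field. lra.
      * rewrite trm_eq by exact Hl. field. lra.
    + unfold beta. rewrite qpoch_high by (lra || exact Hj). unfold Rdiv. ring.
  - intros j Hj. rewrite qpoch_high by (lra || exact Hj). unfold Rdiv. ring.
Qed.

Lemma beta_K Q m j : 0 < Q < 1 ->
  beta Q (S m) (S j) * (1 - Q ^ (S j)) = (1 - Q ^ (S m)) / Q ^ m * beta Q m j.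
Proof.
  intros HQ. unfold beta.
  rewrite qpoch_peel.
  replace (/ Q ^ (S m) * Q) with (/ Q ^ m)
    by (simpl; field; split; [apply pow_nonzero; lra| lra]).
  change (qpoch Q Q (S j)) with (qpoch Q Q j * (1 - Q * Q ^ j)).
  pose proof (qpoch_QQ_pos Q j HQ). pose proof (powS_neq1 Q j HQ).
  assert (Q ^ m <> 0) by (apply pow_nonzero; lra).
  simpl pow. simpl pow in H0. field. repeat split; lra.
Qed.

Lemma cc_Q t Q lam i :
  cc t Q (lam * Q) (S i) = Q ^ (S i) * cc t Q lam (S i) + t * Q ^ i * (Q ^ (S i) - 1) * cc t Q lam i.
Proof.
  induction i as [|i IH].
  - simpl. ring.
  - change (cc t Q (lam * Q) (S (S i))) with (cc t Q (lam * Q) (S i) * (lam * Q - t * Q ^ (S i))).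
    rewrite IH. simpl. ring.
Qed.

Lemma lemA Q t lam n : 0 < Q < 1 -> lam <> 0 ->
  phig Q t (lam * Q) n = phig Q t lam n - lam * Eop Q (phig Q t lam) n.
Proof.
  intros HQ Hl. assert (HlQ : lam * Q <> 0) by (apply Rmult_integral_contrapositive; split; lra).
  destruct n as [|m].
  - simpl Eop. rewrite (phig_fs Q t (lam * Q) 0 1 HQ HlQ) by lia.
    rewrite (phig_fs Q t lam 0 1 HQ Hl) by lia. simpl. ring.
  - simpl Eop.
    rewrite (phig_fs Q t (lam * Q) (S m) (S (S m)) HQ HlQ) by lia.
    rewrite (phig_fs Q t lam (S m) (S (S m)) HQ Hl) by lia.
    rewrite (phig_fs Q t lam m (S (S m)) HQ Hl) by lia.
    set (g := (1 - Q * Q ^ m) / Q ^ m).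
    set (h := fun j => beta Q (S m) (S j) * (1 - Q ^ (S j)) * (cc t Q lam (S j) + t * Q ^ j * cc t Q lam j)).
    assert (Hp : forall j, beta Q (S m) j * cc t Q (lam * Q) j =
                 1 * (beta Q (S m) j * cc t Q lam j) + (- (lam * g)) * (beta Q m j * cc t Q lam j)
                 + (h j - match j with O => 0 | S i => h i end)).
    { intros j. destruct j as [|i].
      - pose proof (beta_K Q m 0 HQ) as K. simpl pow in K. fold g in K.
        unfold h. simpl pow. rewrite K. simpl. ring.
      - pose proof (beta_K Q m (S i) HQ) as K. simpl pow in K. fold g in K.
        unfold h. rewrite cc_Q. simpl pow. rewrite K. simpl. ring. }
    rewrite (fs_ext _ _ _ Hp).
    assert (Hsplit : forall (f1 f2 f3 : nat -> R) N,
              fs (fun j => f1 j + f2 j + f3 j) N = fs f1 N + fs f2 N + fs f3 N).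
    { intros f1 f2 f3 N. induction N; simpl; [ring| rewrite IHN; ring]. }
    rewrite Hsplit. rewrite fs_tele.
    assert (Hc : forall (c : R) f N, fs (fun j => c * f j) N = c * fs f N).
    { intros c f N. induction N; simpl; [ring| rewrite IHN; ring]. }
    rewrite !Hc.
    assert (Hh : h (S m) = 0).
    { unfold h. unfold beta. rewrite (qpoch_high Q (S m) (S (S m))) by (lra || lia).
      unfold Rdiv. ring. }
    rewrite Hh. ring.
Qed.

Definition hterm (Q : R) (n : nat) (b : R) (j : nat) : R :=
  qpoch (/ Q ^ n) Q j * qpoch b Q j / qpoch Q Q j * Q ^ j.

Lemma qcontig x Q i : Q <> 0 ->
  qpoch (x / Q) Q (S i) = qpoch x Q (S i) - x / Q * (1 - Q ^ (S i)) * qpoch x Q i.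
Proof.
  intros HQ. rewrite qpoch_peel. replace (x / Q * Q) with x by (field; exact HQ).
  simpl. field. exact HQ.
Qed.

Lemma hterm_S Q n b i : 0 < Q < 1 ->
  hterm Q (S n) b (S i) = hterm Q n b (S i) - / Q ^ n * (1 - b) * hterm Q n (b * Q) i.
Proof.
  intros HQ. unfold hterm.
  replace (/ Q ^ (S n)) with (/ Q ^ n / Q) by (simpl; field; split; [apply pow_nonzero; lra|lra]).
  rewrite qcontig by lra.
  rewrite (qpoch_peel b Q i).
  change (qpoch Q Q (S i)) with (qpoch Q Q i * (1 - Q * Q ^ i)).
  pose proof (qpoch_QQ_pos Q i HQ). pose proof (powS_neq1 Q i HQ). simpl pow in H0.
  assert (Q ^ n <> 0) by (apply pow_nonzero; lra).
  simpl pow. field. repeat split; lra.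
Qed.

Lemma qcv Q : 0 < Q < 1 -> forall n b N, (n < N)%nat -> fs (hterm Q n b) N = b ^ n.
Proof.
  intros HQ n. induction n as [|n IH]; intros b N HN.
  - rewrite (fs_trunc _ 0 N); [| |exact HN].
    + simpl. unfold hterm. simpl. field.
    + intros j Hj. unfold hterm. rewrite qpoch_high by (lra || exact Hj). unfold Rdiv. ring.
  - destruct N as [|N']; [lia|].
    rewrite fs_shift.
    rewrite (fs_ext _ (fun j => 1 * hterm Q n b (S j) + (- (/ Q ^ n * (1 - b))) * hterm Q n (b * Q) j)).
    2:{ intros j. rewrite hterm_S by exact HQ. ring. }
    rewrite fs_lin.
    pose proof (IH b (S N') ltac:(lia)) as H1. rewrite fs_shift in H1.
    rewrite (IH (b * Q) N') by lia.
    assert (E0 : hterm Q (S n) b 0 = hterm Q n b 0) by (unfold hterm; simpl; reflexivity).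
    rewrite E0.
    assert (Q ^ n <> 0) by (apply pow_nonzero; lra).
    transitivity (hterm Q n b 0 + fs (fun j => hterm Q n b (S j)) N' - (1 - b) * (/ Q ^ n * (b * Q) ^ n)).
    + ring.
    + rewrite H1. rewrite Rpow_mult_distr. simpl. field. exact H.
Qed.

Lemma phig_neg1 Q t n : 0 < Q < 1 -> phig Q t (-1) n = (- t) ^ n.
Proof.
  intros HQ. unfold phig, phi21. rewrite (Series_fin _ n).
  - rewrite <- (qcv Q HQ n (- t) (S n)) by lia. apply fs_ext. intros j.
    unfold hterm. rewrite qpoch0. replace (t / -1) with (- t) by field.
    replace (- Q * -1) with Q by ring. rewrite Rmult_1_r. reflexivity.
  - intros j Hj. rewrite qpoch_high by (lra || exact Hj). unfold Rdiv. ring.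
Qed.

Lemma phig_t Q t n : 0 < Q < 1 -> 0 < t -> phig Q t t n = 1.
Proof.
  intros HQ Ht. unfold phig, phi21. rewrite (Series_fin _ 0).
  - simpl. field.
  - intros j Hj. destruct j as [|j]; [lia|].
    replace (t / t) with 1 by (field; lra). rewrite (qpoch_peel 1). rewrite Rminus_diag. rewrite !Rmult_0_l, Rmult_0_r. unfold Rdiv. rewrite !Rmult_0_l. reflexivity.
Qed.

Lemma phig_Rk Q t a b : 0 < Q < 1 -> a <> 0 -> (forall n, phig Q t a n = (- b) ^ n) ->
  forall k n, phig Q t (a * Q ^ k) n = Rk Q a b k n.
Proof.
  intros HQ Ha Hb k. induction k as [|k IH]; intros n.
  - simpl. rewrite Rmult_1_r. apply Hb.
  - replace (a * Q ^ (S k)) with (a * Q ^ k * Q) by (simpl; ring).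
    assert (Hk : a * Q ^ k <> 0) by (apply Rmult_integral_contrapositive; split; [exact Ha| apply pow_nonzero; lra]).
    rewrite lemA by assumption. rewrite Rk_S. rewrite IH. f_equal. f_equal.
    apply Eop_ext. exact IH.
Qed.


Definition unitC (z : C) : Prop := fst z * fst z + snd z * snd z = 1.

Lemma unitC_mult z1 z2 : unitC z1 -> unitC z2 -> unitC (z1 * z2)%C.
Proof.
  destruct z1 as [x1 y1], z2 as [x2 y2]. unfold unitC. simpl. intros H1 H2.
  transitivity ((x1 * x1 + y1 * y1) * (x2 * x2 + y2 * y2)); [ring|]. rewrite H1, H2. ring.
Qed.

Lemma unitC_Cpow n : unitC (Cpow Ci n).
Proof.
  induction n as [|n IH]; simpl.
  - unfold unitC. simpl. ring.
  - apply unitC_mult; [|exact IH]. unfold unitC, Ci. simpl. ring.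
Qed.

Lemma unitC_cs x : unitC (cos x, sin x).
Proof. unfold unitC. simpl. rewrite <- (sin2_cos2 x). unfold Rsqr. ring. Qed.

Lemma Cterm a p1 p2 z : unitC z ->
  (RtoC a * (z * RtoC p1) * Cconj (z * RtoC p2))%C = RtoC (a * p1 * p2).
Proof.
  destruct z as [x y]. unfold unitC. simpl. intros H.
  unfold RtoC, Cmult, Cconj. simpl. f_equal.
  - transitivity (a * p1 * p2 * (x * x + y * y)); [ring|]. rewrite H. ring.
  - ring.
Qed.

Lemma sum_n_RtoC (a : nat -> R) n : sum_n (fun k => RtoC (a k)) n = RtoC (sum_n a n).
Proof.
  induction n.
  - rewrite !sum_O. reflexivity.
  - rewrite !sum_Sn, IHn. unfold plus; simpl. rewrite RtoC_plus. reflexivity.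
Qed.

Lemma is_series_RtoC (a : nat -> R) (l : R) :
  is_series a l -> is_series (fun n => RtoC (a n)) (RtoC l).
Proof.
  intros H. unfold is_series in *.
  apply filterlim_locally. intros eps.
  apply (filterlim_locally (sum_n a) l) with (eps := eps) in H.
  revert H. apply filter_imp. intros n Hn.
  rewrite sum_n_RtoC. split; simpl.
  - exact Hn.
  - apply ball_center.
Qed.

Lemma inner_from_real q tau phi lam mu (V : R) :
  is_series (fun n => q ^ (2 * n) * pn q tau lam n * pn q tau mu n) V ->
  inner_is (Dop q (vvec q tau phi lam)) (vvec q tau phi mu) (RtoC V).
Proof.
  intros H. unfold inner_is. apply is_series_RtoC in H.
  revert H. apply is_series_ext. intros n.
  unfold Dop, vvec. rewrite Cterm; [reflexivity|].
  apply unitC_mult; [apply unitC_Cpow| apply unitC_cs].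
Qed.

Lemma INR_nn1 n : INR (n * (n - 1)) = INR n * (INR n - 1).
Proof.
  destruct n as [|m]; [simpl; ring|].
  rewrite mult_INR, minus_INR by lia. simpl INR at 3. ring.
Qed.

Lemma cw_q q n : 0 < q -> q ^ 2 < 1 ->
  cw (q ^ 2) n = q ^ (n * (n - 1)) / qpoch (q ^ 2) (q ^ 2) n.
Proof.
  intros Hq Hq1. assert (HQ : 0 < q ^ 2 < 1) by (split; [apply pow_lt; lra|exact Hq1]).
  induction n as [|n IH].
  - simpl. field.
  - change (cw (q ^ 2) (S n)) with (cw (q ^ 2) n * (q ^ 2) ^ n / (1 - (q ^ 2) ^ (S n))). rewrite IH.
    replace (S n * (S n - 1))%nat with (n * (n - 1) + 2 * n)%nat by (destruct n; simpl; lia).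
    rewrite pow_add, (pow_mult q 2 n).
    change (qpoch (q ^ 2) (q ^ 2) (S n)) with (qpoch (q ^ 2) (q ^ 2) n * (1 - q ^ 2 * (q ^ 2) ^ n)).
    pose proof (qpoch_QQ_pos (q ^ 2) n HQ). pose proof (powS_neq1 (q ^ 2) n HQ).
    change ((q ^ 2) ^ (S n)) with (q ^ 2 * (q ^ 2) ^ n) in H0 |- *. field. split; lra.
Qed.

Lemma pn_phig q tau lam n :
  pn q tau lam n = Rpower q (- INR n * tau) * Rpower q (INR n * (INR n - 1) / 2)
                   / sqrt (qpoch (q ^ 2) (q ^ 2) n) * phig (q ^ 2) (Rpower q (2 * tau)) lam n.
Proof. unfold pn, phig. rewrite pow_mult. reflexivity. Qed.

Lemma real_term q tau lam mu n : 0 < q < 1 ->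
  q ^ (2 * n) * pn q tau lam n * pn q tau mu n =
  term (q ^ 2) (q ^ 2 / Rpower q (2 * tau))
       (phig (q ^ 2) (Rpower q (2 * tau)) lam) (phig (q ^ 2) (Rpower q (2 * tau)) mu) n.
Proof.
  intros Hq. rewrite !pn_phig. unfold term, ww.
  assert (Hq2 : q ^ 2 < 1) by (simpl; nra).
  rewrite cw_q by lra.
  set (t := Rpower q (2 * tau)). assert (Ht : 0 < t) by (unfold t, Rpower; apply exp_pos).
  set (c := qpoch (q ^ 2) (q ^ 2) n).
  assert (Hc : 0 < c) by (apply qpoch_QQ_pos; split; [apply pow_lt; lra|exact Hq2]).
  assert (A1 : Rpower q (- INR n * tau) * Rpower q (- INR n * tau) = / t ^ n).
  { rewrite <- Rpower_plus. replace (- INR n * tau + - INR n * tau) with (- (2 * tau * INR n)) by ring.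
    rewrite Rpower_Ropp, <- Rpower_mult, Rpower_pow by exact Ht. reflexivity. }
  assert (A2 : Rpower q (INR n * (INR n - 1) / 2) * Rpower q (INR n * (INR n - 1) / 2) = q ^ (n * (n - 1))).
  { rewrite <- Rpower_plus. rewrite <- Rpower_pow by lra. f_equal. rewrite INR_nn1. field. }
  assert (A3 : sqrt c * sqrt c = c) by (apply sqrt_sqrt; lra).
  assert (Hs : 0 < sqrt c) by (apply sqrt_lt_R0; exact Hc).
  rewrite (pow_mult q 2 n).
  assert (U : (q ^ 2 / t) ^ n = (q ^ 2) ^ n / t ^ n)
    by (unfold Rdiv; rewrite Rpow_mult_distr, pow_inv; reflexivity).
  rewrite U.
  set (P1 := Rpower q (- INR n * tau)). set (P2 := Rpower q (INR n * (INR n - 1) / 2)).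
  fold P1 P2 in A1, A2.
  assert (t ^ n <> 0) by (apply pow_nonzero; lra).
  transitivity ((q ^ 2) ^ n * (P1 * P1) * (P2 * P2) / (sqrt c * sqrt c)
                 * phig (q ^ 2) t lam n * phig (q ^ 2) t mu n).
  - field. lra.
  - rewrite A1, A2, A3. field. split; lra.
Qed.

Lemma Rpower_2 q : 0 < q -> Rpower q 2 = q ^ 2.
Proof. intros Hq. replace 2 with (INR 2) by (simpl; ring). apply Rpower_pow; exact Hq. Qed.

Lemma Rpower_2k q k : 0 < q -> Rpower q (2 * INR k) = (q ^ 2) ^ k.
Proof.
  intros Hq. rewrite <- Rpower_mult. rewrite Rpower_2 by exact Hq.
  apply Rpower_pow. apply pow_lt; exact Hq.
Qed.

Lemma phig_negk q tau k n : 0 < q < 1 ->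
  phig (q ^ 2) (Rpower q (2 * tau)) (- q ^ (2 * k)) n = Rk (q ^ 2) (-1) (Rpower q (2 * tau)) k n.
Proof.
  intros Hq. assert (HQ : 0 < q ^ 2 < 1) by (split; [apply pow_lt; lra| simpl; nra]).
  replace (- q ^ (2 * k)) with (-1 * (q ^ 2) ^ k) by (rewrite pow_mult; ring).
  apply phig_Rk; [exact HQ|lra|]. intros m. apply phig_neg1; exact HQ.
Qed.

Lemma phig_posk q tau k n : 0 < q < 1 ->
  phig (q ^ 2) (Rpower q (2 * tau)) (Rpower q (2 * tau + 2 * INR k)) n =
  Rk (q ^ 2) (Rpower q (2 * tau)) (-1) k n.
Proof.
  intros Hq. assert (HQ : 0 < q ^ 2 < 1) by (split; [apply pow_lt; lra| simpl; nra]).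
  assert (Ht : 0 < Rpower q (2 * tau)) by (unfold Rpower; apply exp_pos).
  rewrite Rpower_plus, Rpower_2k by lra.
  apply phig_Rk; [exact HQ|lra|]. intros m. rewrite phig_t by assumption.
  replace (- -1) with 1 by ring. rewrite pow1. reflexivity.
Qed.

Theorem lemma5p5 (q tau phi : R) (hq0 : 0 < q) (hq1 : q < 1)
  (hphi0 : 0 <= phi) (hphi1 : phi < 2 * PI) :
  (forall k l : nat, (l <= k)%nat ->
     inner_is (Dop q (vvec q tau phi (- q ^ (2 * k))))
              (vvec q tau phi (- q ^ (2 * l)))
              (RtoC (qpoch_inf (- Rpower q (2 * tau + 2)) (q ^ 2)
                     * qpoch (q ^ 2) (q ^ 2) k
                     * qpoch (- Rpower q (2 - 2 * tau)) (q ^ 2) l))) /\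
  (forall k l : nat, (l <= k)%nat ->
     inner_is (Dop q (vvec q tau phi (Rpower q (2 * tau + 2 * INR k))))
              (vvec q tau phi (Rpower q (2 * tau + 2 * INR l)))
              (RtoC (qpoch_inf (- Rpower q (2 - 2 * tau)) (q ^ 2)
                     * qpoch (q ^ 2) (q ^ 2) k
                     * qpoch (- Rpower q (2 + 2 * tau)) (q ^ 2) l))) /\
  (forall k l : nat,
     inner_is (Dop q (vvec q tau phi (- q ^ (2 * k))))
              (vvec q tau phi (Rpower q (2 * tau + 2 * INR l)))
              (RtoC (qpoch_inf (q ^ 2) (q ^ 2)
                     * qpoch (- Rpower q (2 - 2 * tau)) (q ^ 2) k
                     * qpoch (- Rpower q (2 + 2 * tau)) (q ^ 2) l))).
Proof.
  assert (Hq : 0 < q < 1) by lra.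
  assert (HQ : 0 < q ^ 2 < 1) by (split; [apply pow_lt; lra| simpl; nra]).
  assert (Ht : 0 < Rpower q (2 * tau)) by (unfold Rpower; apply exp_pos).
  assert (R1 : Rpower q (2 * tau + 2) = q ^ 2 * Rpower q (2 * tau))
    by (rewrite Rpower_plus, Rpower_2 by lra; ring).
  assert (R2 : Rpower q (2 - 2 * tau) = q ^ 2 / Rpower q (2 * tau)).
  { unfold Rminus. rewrite Rpower_plus, Rpower_2, Rpower_Ropp by lra. unfold Rdiv. ring. }
  assert (R3 : Rpower q (2 + 2 * tau) = q ^ 2 * Rpower q (2 * tau))
    by (rewrite Rpower_plus, Rpower_2 by lra; ring).
  rewrite R1, R2, R3.
  set (t := Rpower q (2 * tau)) in *.
  set (Q := q ^ 2) in *.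
  assert (Q0 : Q ^ 0 = 1) by reflexivity.
  split; [|split].
  - intros k l Hlk. apply inner_from_real.
    pose proof (NN Q t HQ Ht l k 0 Hlk) as H.
    rewrite Q0 in H. replace (t / 1) with t in H by field.
    eapply is_series_val.
    + match type of H with is_series ?f _ => apply (is_series_ext f); [|exact H] end.
      intros n. toR.
      unfold t, Q. rewrite real_term by exact Hq. unfold term.
      rewrite !phig_negk by exact Hq. reflexivity.
    + replace (- (Q / t * t * t)) with (- (Q * t)) by (field; lra). reflexivity.
  - intros k l Hlk. apply inner_from_real.
    pose proof (PP Q t HQ Ht l k 0 Hlk) as H.
    rewrite Q0 in H. replace (-1 / 1) with (-1) in H by field.
    eapply is_series_val.
    + match type of H with is_series ?f _ => apply (is_series_ext f); [|exact H] end.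
      intros n. toR.
      unfold t, Q. rewrite real_term by exact Hq. unfold term.
      rewrite !phig_posk by exact Hq. reflexivity.
    + replace (- (Q / t * -1 * -1)) with (- (Q / t)) by (field; lra). reflexivity.
  - intros k l. apply inner_from_real.
    pose proof (NP Q t HQ Ht l k 0) as H.
    rewrite Q0 in H. replace (t / 1) with t in H by field.
    eapply is_series_val.
    + match type of H with is_series ?f _ => apply (is_series_ext f); [|exact H] end.
      intros n. toR.
      unfold t, Q. rewrite real_term by exact Hq. unfold term.
      rewrite phig_negk, phig_posk by exact Hq. reflexivity.
    + replace (- (Q / t * t * -1)) with Q by (field; lra). reflexivity.
Qed.
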